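(* Let $p$ be a prime and let $P$ be a nonabelian finite $p$-group on which there exists a transitive saturated fusion system. Then $P$ is indecomposable as a direct product, i.e. $P$ is not the direct product of two nontrivial subgroups.
   Context: A saturated fusion system $\mathcal{F}$ on a finite $p$-group $P$ is called transitive if any two nontrivial elements of $P$ are $\mathcal{F}$-conjugate. *)

(* Defs.v *)
From HB Require Import structures.
From mathcomp Require Import all_boot all_order all_fingroup all_solvable.
Set Implicit Arguments. Unset Strict Implicit. Unset Printing Implicit Defensive.
Import GroupScope.
Local Open Scope group_scope.

(* A fusion system over P is encoded as a boolean predicate F Q f meaning
   "f (restricted to Q) is a morphism of F with source Q" (target: any
   subgroup of P containing f(Q), i.e. Hom_F(Q,R) = {f | F Q f, f(Q) <= R}). *)
Section Fusion.
Variable gT : finGroupType.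
Implicit Types (P Q R : {set gT}).

Definition fusion_pred := {set gT} -> {ffun gT -> gT} -> bool.

(* Fusion system (Puig / Aschbacher-Kessar-Oliver Def. I.2.1):
   objects are subgroups of P; morphisms are injective homomorphisms;
   Hom_P(Q,R) <= Hom_F(Q,R); F is closed under composition (category);
   every morphism is an F-isomorphism onto its image (its inverse lies in F)
   followed by an inclusion. Morphisms are considered as maps on Q only. *)
Definition is_fusion_system (P : {set gT}) (F : fusion_pred) : Prop :=
  [/\ (forall Q f, F Q f ->
         [/\ group_set Q, Q \subset P, {in Q &, {morph f : x y / x * y}},
             {in Q &, injective f} & f @: Q \subset P]),
      (forall Q (f g : {ffun gT -> gT}), F Q f -> {in Q, f =1 g} -> F Q g),
      (forall (Q : {group gT}) g, Q \subset P -> g \in P ->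
         F Q [ffun x => x ^ g]),
      (forall Q R f g, F Q f -> F R g -> f @: Q \subset R ->
         F Q [ffun x => g (f x)]) &
      (forall Q f, F Q f ->
         exists g, F (f @: Q) g /\ {in Q, forall x, g (f x) = x})].

Definition Fconjugate (F : fusion_pred) Q R : Prop :=
  exists f, F Q f /\ f @: Q = R.

Definition fully_normalized P (F : fusion_pred) Q : Prop :=
  forall R, Fconjugate F Q R -> #|'N_P(R)| <= #|'N_P(Q)|.

Definition fully_centralized P (F : fusion_pred) Q : Prop :=
  forall R, Fconjugate F Q R -> #|'C_P(R)| <= #|'C_P(Q)|.

Definition AutF (F : fusion_pred) Q : {set {perm gT}} :=
  [set a in Aut Q | F Q [ffun x => a x]].

Definition AutP P Q : {set {perm gT}} :=
  [set a in Aut Q | [exists g in 'N_P(Q), [forall x in Q, a x == x ^ g]]].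

(* N_phi = { g in N_P(Q) | phi c_g phi^-1 in Aut_P(phi(Q)) } *)
Definition Nphi P Q (f : {ffun gT -> gT}) : {set gT} :=
  [set g in 'N_P(Q) |
     [exists h in 'N_P(f @: Q), [forall x in Q, f (x ^ g) == f x ^ h]]].

Definition saturated_fusion_system (p : nat) (P : {set gT}) (F : fusion_pred)
  : Prop :=
  [/\ is_fusion_system P F,
      (forall Q : {group gT}, Q \subset P -> fully_normalized P F Q ->
         fully_centralized P F Q /\ p.-Sylow(AutF F Q) (AutP P Q)) &
      (forall Q (f : {ffun gT -> gT}), F Q f ->
         fully_centralized P F (f @: Q) ->
         exists fb, F (Nphi P Q f) fb /\ {in Q, fb =1 f})].

Definition transitive_fusion (P : {set gT}) (F : fusion_pred) : Prop :=
  forall x y, x \in P -> y \in P -> x != 1 -> y != 1 ->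
    exists f, F <[x]> f /\ f x = y.

End Fusion.

(* Main.v *)
Require Import Defs.
From HB Require Import structures.
From mathcomp Require Import all_boot all_order all_fingroup all_solvable.
Set Implicit Arguments. Unset Strict Implicit. Unset Printing Implicit Defensive.
Import GroupScope.
Local Open Scope group_scope.
Lemma central_comm (gT : finGroupType) (A : {group gT}) :
  nilpotent A -> ~~ abelian A ->
  exists l a, [/\ l \in A, a \in A, [~ l, a] != 1 & [~ l, a] \in 'Z(A)].
Proof.
move=> /lcnP[N LN] nab.
suff H: forall k m, N <= m + k -> 'L_m.+2(A) != 1 ->
  exists l a, [/\ l \in A, a \in A, [~ l, a] != 1 & [~ l, a] \in 'Z(A)].
  apply: (H N 0) => //; rewrite lcnSn lcn1; apply/eqP=> /commG1P.
  by move=> cAA; case/negP: nab.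
elim=> [|k IH] m.
  rewrite addn0 => le /negP []. 
  by rewrite eqEsubset sub1G andbT -LN lcn_sub_leq // ltnS ltnW.
move=> le ntL.
have [L3 | ntL3] := eqVneq 'L_m.+3(A) 1; last by apply: (IH m.+1); rewrite ?addSnnS.
have cL : 'L_m.+2(A) \subset 'C(A) by apply/commG1P.
move: ntL; rewrite lcnSn => ntL.
have : ~~ (commg_set 'L_m.+1(A) A \subset [1]).
  by apply: contra ntL => sub; rewrite -subG1 /commutator gen_subG.
case/subsetPn=> c /imset2P[l a Ll Aa ->] nt.
exists l, a; split.
- exact: (subsetP (lcn_sub m.+1 A)).
- done.
- by rewrite -in_set1.
- rewrite inE; apply/andP; split.
    by apply: (subsetP (lcn_sub m.+2 A)); rewrite lcnSn mem_commg.
  by apply: (subsetP cL); rewrite lcnSn mem_commg.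
Qed.

Lemma key (gT : finGroupType) (P : {group gT}) p (F : fusion_pred gT) x1 x2 :
  saturated_fusion_system p P F -> transitive_fusion P F ->
  x1 \in 'Z(P) -> x2 \in 'Z(P) -> x1 != 1 -> x2 != 1 ->
  exists fb : {ffun gT -> gT}, [/\ {in P &, {morph fb : x y / x * y}},
     {in P &, injective fb}, fb @: P \subset P & fb x1 = x2].
Proof.
case=> [[Fax _ _ _ _] _ Fextn] Htr Z1 Z2 n1 n2.
have /setIP[P1 C1] := Z1; have /setIP[P2 C2] := Z2.
have [f [Ff fx]] := Htr x1 x2 P1 P2 n1 n2.
have [_ _ fM _ _] := Fax _ _ Ff.
have fX : forall k, f (x1 ^+ k) = x2 ^+ k.
  elim=> [|k IH].
    have := fM 1 1 (group1 _) (group1 _); rewrite mulg1 expg0 => e.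
    by apply: (@mulgI _ (f 1)); rewrite -e mulg1.
  by rewrite !expgSr fM ?mem_cycle ?cycle_id // IH fx.
have cS : f @: <[x1]> \subset 'C(P).
  by apply/subsetP => _ /imsetP[y /cycleP[k ->] ->]; rewrite fX groupX.
have fc : fully_centralized P F (f @: <[x1]>).
  move=> R _; have -> : 'C_P(f @: <[x1]>) = P by apply/setIidPl; rewrite centsC.
  by apply: subset_leq_card; apply: subsetIl.
have [fb [Ffb fbf]] := Fextn _ _ Ff fc.
have cx1 : <[x1]> \subset 'C(P) by rewrite cycle_subG.
have NP : Nphi P <[x1]> f = P.
  apply/setP=> g; rewrite /Nphi inE; apply/idP/idP.
    by case/andP=> /setIP[].
  move=> Pg; apply/andP; split.
    rewrite inE Pg /=; apply: (subsetP (cents_norm _)) Pg; by rewrite centsC.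
  apply/exists_inP; exists 1; first exact: group1.
  apply/forall_inP=> x Hx; rewrite conjg1.
  have -> // : x ^ g = x.
  apply/conjg_fixP/commgP; exact: (centP (subsetP cx1 x Hx) g Pg).
rewrite NP in Ffb.
have [_ _ fbM fbI fbS] := Fax _ _ Ffb.
exists fb; split => //; by rewrite fbf ?cycle_id.
Qed.

Lemma aux (p : nat) (gT : finGroupType) (P : {group gT}) (F : fusion_pred gT)
  (A B : {group gT}) :
  (p.-group P)%g -> saturated_fusion_system p P F -> transitive_fusion P F ->
  A \x B = P -> ~~ abelian A -> B :!=: 1 -> False.
Proof.
move=> pP sat tr defP nab ntB.
have [_ defAB cAB tiAB] := dprodP defP.
have sAP : A \subset P by rewrite -defAB mulG_subl.
have sBP : B \subset P by rewrite -defAB mulG_subr.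
have [l [a [Al Aa ntz Zz]]] := central_comm (pgroup_nil (pgroupS sAP pP)) nab.
set z := [~ l, a] in ntz Zz.
have ntZB : 'Z(B) :!=: 1.
  by apply: contra ntB => /eqP/(trivg_center_pgroup (pgroupS sBP pP)) ->.
have [w Zw ntw] := trivgPn _ ntZB.
have /setIP[Bw Cw] := Zw; have /setIP[Az Cz] := Zz.
have cBA : A \subset 'C(B) by rewrite centsC.
have ZzP : z \in 'Z(P).
  by rewrite inE (subsetP sAP) //= -defAB centM inE Cz (subsetP cBA).
have ZwP : w \in 'Z(P).
  by rewrite inE (subsetP sBP) //= -defAB centM inE Cw (subsetP cAB).
have ntzw : z * w != 1.
  apply: contra ntz => /eqP e; have ez : z = w^-1 by rewrite -(mulgK w z) e mul1g.
  by apply/eqP/set1gP; rewrite -tiAB inE Az /= ez groupV Bw.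
have [fb [fbM fbI fbS fbx]] := key sat tr ZzP (groupM ZzP ZwP) ntz ntzw.
pose fm := @Morphism _ _ P fb fbM.
have fbR : {in P &, {morph fb : x y / [~ x, y]}} := morphR fm.
pose T x := [set y in P | [exists g in P, [~ y, g] == x]].
have le1 : #|T z| <= #|T (z * w)|.
  rewrite -(card_in_imset (f := fb) (D := T z)); last first.
    by move=> x y /setIdP[Px _] /setIdP[Py _]; apply: fbI.
  apply: subset_leq_card; apply/subsetP => _ /imsetP[y /setIdP[Py /exists_inP[g Pg /eqP e]] ->].
  have fP : forall x, x \in P -> fb x \in P.
    by move=> x Px; apply: (subsetP fbS); apply: imset_f.
  rewrite inE fP //=; apply/exists_inP; exists (fb g); first exact: fP.
  by rewrite -fbR // e fbx.
have compl : B \in [complements to A in P] by apply/complP.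
have [nsAP _] := dprod_normal2 defP.
pose rm := @Morphism _ _ P (remgr A B) (remgrM compl nsAP).
pose dm := @Morphism _ _ P (divgr A B) (divgrM compl cAB).
have rR : {in P &, {morph remgr A B : x y / [~ x, y]}} := morphR rm.
have dR : {in P &, {morph divgr A B : x y / [~ x, y]}} := morphR dm.
have PAB : forall x, x \in P -> x \in A * B by move=> x; rewrite defAB.
have ltT : T (z * w) \proper T z.
  rewrite properE; apply/andP; split.
    apply/subsetP=> y /setIdP[Py /exists_inP[g Pg /eqP e]].
    have Ag' : divgr A B g \in A by rewrite mem_divgr ?PAB.
    have Pg' : divgr A B g \in P by apply: (subsetP sAP).
    rewrite inE Py /=; apply/exists_inP; exists (divgr A B g) => //.
    rewrite (divgr_eq A B [~ y, divgr A B g]) dR // rR //.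
    rewrite (divgr_id _ Ag') (remgr1 B Ag') commg1 mulg1 -dR // e.
    by rewrite divgrMid.
  apply/subsetPn; exists l.
    rewrite inE (subsetP sAP) //=; apply/exists_inP; exists a => //.
    exact: (subsetP sAP).
  rewrite inE negb_and; apply/orP; right; apply/negP=> /exists_inP[g Pg /eqP e].
  have := congr1 (remgr A B) e; rewrite rR ?(subsetP sAP l Al) //. rewrite (remgr1 B Al) comm1g.
  by rewrite remgrMid // => w1; rewrite -w1 eqxx in ntw.
by have := proper_card ltT; rewrite ltnNge le1.
Qed.

Theorem proposition2p2 (p : nat) (gT : finGroupType) (P : {group gT})
    (F : fusion_pred gT) :
  prime p -> (p.-group P)%g -> ~~ abelian P ->
  saturated_fusion_system p P F -> transitive_fusion P F ->
  forall A B : {group gT}, (A \x B)%g = P -> (A :=: 1)%g \/ (B :=: 1)%g.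
Proof.
move=> _ pP nabP sat tr A B defP.
case: (eqsVneq A 1) => [eA | ntA']; first by left.
case: (eqsVneq B 1) => [eB | ntB']; first by right.
have [_ defAB cAB _] := dprodP defP.
case abA: (abelian A); last first.
  by exfalso; apply: (aux pP sat tr defP); rewrite ?abA.
case abB: (abelian B); last first.
  by exfalso; apply: (aux pP sat tr (etrans (dprodC B A) defP)); rewrite ?abB.
by move: nabP; rewrite -defAB abelianM abA abB cAB.
Qed.
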